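(* (i) Let $p,m,n\in\mathbb{N}$ and let $\{R_j\}_{j\in J}$ be a system of representatives of the right cosets in $\Gamma_0(nm,p)\backslash\Gamma_0(n,p)$. Then for distinct $j_1,j_2\in J$, $\Gamma_0(nm)R_{j_1}\cap\Gamma_0(nm)R_{j_2}=\emptyset$. (ii) Let $p$ be a prime with $p\mid n$, $e\in\mathbb{N}$, and let $\{R_j\}_{j\in J}$ be a system of representatives of the right cosets in $\Gamma_0(p^en,p)\backslash\Gamma_0(n,p)$ (i.e. $\Gamma_0(n,p)=\bigsqcup_{j}\Gamma_0(p^en,p)R_j$). Then $\{R_j\}_{j\in J}$ is also a system of representatives of the right cosets in $\Gamma_0(p^en)\backslash\Gamma_0(n)$.
   Context: $\Gamma_0(n)=\{\begin{pmatrix}a&b\\c&d\end{pmatrix}\in SL(2,\mathbb{Z}):n\mid c\}$; $\Gamma_0(n,m)=\{\begin{pmatrix}a&b\\c&d\end{pmatrix}\in SL(2,\mathbb{Z}):n\mid c,\ m\mid b\}$. *)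

(* Defs.v *)
From mathcomp Require Import all_boot all_order all_algebra.
Set Implicit Arguments. Unset Strict Implicit. Unset Printing Implicit Defensive.
Import Order.TTheory GRing.Theory Num.Theory.
Local Open Scope ring_scope.

Definition i0 : 'I_2 := ord0.
Definition i1 : 'I_2 := ord_max.

Definition SL2Z (A : 'M[int]_2) : bool := \det A == 1.

Definition Gamma0 (n : nat) (A : 'M[int]_2) : bool :=
  SL2Z A && (n%:Z %| A i1 i0)%Z.

Definition Gamma0nm (n m : nat) (A : 'M[int]_2) : bool :=
  SL2Z A && (n%:Z %| A i1 i0)%Z && (m%:Z %| A i0 i1)%Z.

Definition in_rcoset (H : pred 'M[int]_2) (R g : 'M[int]_2) : Prop :=
  exists2 h, H h & g = h *m R.

Definition rcoset_reps (H G : pred 'M[int]_2) (J : Type) (R : J -> 'M[int]_2)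
  : Prop :=
  (forall j, G (R j)) /\
  (forall g, G g -> exists j, in_rcoset H (R j) g) /\
  (forall j1 j2 g, in_rcoset H (R j1) g -> in_rcoset H (R j2) g -> j1 = j2).

(* Main.v *)
Require Import Defs.
From mathcomp Require Import all_boot all_order all_algebra.
From mathcomp Require Import ring zify.
Import Order.TTheory GRing.Theory Num.Theory.
Local Open Scope ring_scope.

Lemma ord2E (i : 'I_2) : i = i0 \/ i = i1.
Proof. case: i => [[|[|k]] Hk]; [left|right|by []]; exact/val_inj. Qed.

Lemma detE (A : 'M[int]_2) : \det A = A i0 i0 * A i1 i1 - A i0 i1 * A i1 i0.
Proof.
rewrite (expand_det_row _ ord0) !big_ord_recl big_ord0 /cofactor !det_mx11 !mxE /=.
have -> : lift ord0 ord0 = i1 :> 'I_2 by exact/val_inj.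
have -> : lift i1 ord0 = i0 :> 'I_2 by exact/val_inj.
rewrite /i0 expr0 expr1; ring.
Qed.

Lemma mulE (A B : 'M[int]_2) i j : (A *m B) i j = A i i0 * B i0 j + A i i1 * B i1 j.
Proof.
rewrite !mxE !big_ord_recl big_ord0 /=.
have -> : lift ord0 ord0 = i1 :> 'I_2 by exact/val_inj.
by rewrite addr0.
Qed.

Lemma mx2P (A B : 'M[int]_2) : A i0 i0 = B i0 i0 -> A i0 i1 = B i0 i1 ->
  A i1 i0 = B i1 i0 -> A i1 i1 = B i1 i1 -> A = B.
Proof.
move=> h1 h2 h3 h4; apply/matrixP => i j.
by case: (ord2E i) => ->; case: (ord2E j) => ->.
Qed.

Definition adj2 (A : 'M[int]_2) : 'M[int]_2 :=
  \matrix_(i, j) if i == i0 then (if j == i0 then A i1 i1 else - A i0 i1)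
                 else (if j == i0 then - A i1 i0 else A i0 i0).

Lemma adj2E (A : 'M[int]_2) :
  [/\ adj2 A i0 i0 = A i1 i1, adj2 A i0 i1 = - A i0 i1,
      adj2 A i1 i0 = - A i1 i0 & adj2 A i1 i1 = A i0 i0].
Proof. by rewrite !mxE. Qed.

Lemma id1E : [/\ (1%:M : 'M[int]_2) i0 i0 = 1, (1%:M : 'M[int]_2) i0 i1 = 0,
      (1%:M : 'M[int]_2) i1 i0 = 0 & (1%:M : 'M[int]_2) i1 i1 = 1].
Proof. by rewrite !mxE. Qed.

Lemma adj2_mull (A : 'M[int]_2) : \det A = 1 -> adj2 A *m A = 1%:M.
Proof.
rewrite detE => hd; case: (adj2E A) => e1 e2 e3 e4; case: id1E => f1 f2 f3 f4.
apply: mx2P; rewrite mulE ?e1 ?e2 ?e3 ?e4 ?f1 ?f2 ?f3 ?f4; rewrite -?hd; ring.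
Qed.

Lemma adj2_mulr (A : 'M[int]_2) : \det A = 1 -> A *m adj2 A = 1%:M.
Proof.
rewrite detE => hd; case: (adj2E A) => e1 e2 e3 e4; case: id1E => f1 f2 f3 f4.
apply: mx2P; rewrite mulE ?e1 ?e2 ?e3 ?e4 ?f1 ?f2 ?f3 ?f4; rewrite -?hd; ring.
Qed.

Lemma det_adj2 (A : 'M[int]_2) : \det (adj2 A) = \det A.
Proof. case: (adj2E A) => e1 e2 e3 e4; rewrite !detE e1 e2 e3 e4; ring. Qed.

Lemma key N n p (h1 h2 R1 R2 : 'M[int]_2) :
  Gamma0 N h1 -> Gamma0 N h2 -> Gamma0nm n p R1 -> Gamma0nm n p R2 ->
  h1 *m R1 = h2 *m R2 -> in_rcoset (Gamma0nm N p) R2 R1.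
Proof.
rewrite /Gamma0 /Gamma0nm /SL2Z.
move=> /andP[/eqP d1 /dvdzP[q1 c1]] /andP[/eqP d2 /dvdzP[q2 c2]].
move=> /andP[/andP[/eqP dR1 _] /dvdzP[r1 b1]] /andP[/andP[/eqP dR2 _] /dvdzP[r2 b2]] E.
exists (adj2 h1 *m h2); last first.
  by rewrite -mulmxA -E mulmxA adj2_mull // mul1mx.
have E2 : adj2 h1 *m h2 = R1 *m adj2 R2.
  by rewrite -[LHS]mulmx1 -(adj2_mulr _ dR2) mulmxA -(mulmxA _ h2) -E mulmxA adj2_mull // mul1mx.
rewrite det_mulmx det_adj2 d1 d2 mul1r eqxx /=.
apply/andP; split.
  apply/dvdzP; case: (adj2E h1) => e1 e2 e3 e4.
  exists (- q1 * h2 i0 i0 + h1 i0 i0 * q2); rewrite mulE e3 e4 c1 c2; ring.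
apply/dvdzP; rewrite E2; case: (adj2E R2) => e1 e2 e3 e4.
exists (- R1 i0 i0 * r2 + r1 * R2 i0 i0); rewrite mulE e2 e4 b1 b2; ring.
Qed.

Arguments key {N n p h1 h2 R1 R2}.

Definition mk2 (a b c d : int) : 'M[int]_2 :=
  \matrix_(i, j) if i == i0 then (if j == i0 then a else b)
                 else (if j == i0 then c else d).

Lemma mk2E a b c d :
  [/\ mk2 a b c d i0 i0 = a, mk2 a b c d i0 i1 = b,
      mk2 a b c d i1 i0 = c & mk2 a b c d i1 i1 = d].
Proof. by rewrite !mxE. Qed.

Lemma Gamma0nm1 n p : Gamma0nm n p 1%:M.
Proof. by rewrite /Gamma0nm /SL2Z det1 eqxx !mxE /= !dvdz0. Qed.

Lemma G0nm_G0 n p A : Gamma0nm n p A -> Gamma0 n A.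
Proof. by rewrite /Gamma0nm /Gamma0 => /andP[]. Qed.

Theorem mainTheorem9 :
  (* (i) *)
  (forall (p m n : nat), (0 < p)%N -> (0 < m)%N -> (0 < n)%N ->
   forall (J : Type) (R : J -> 'M[int]_2),
     rcoset_reps (Gamma0nm (n * m) p) (Gamma0nm n p) R ->
     forall j1 j2 : J, j1 <> j2 ->
       forall g : 'M[int]_2,
         ~ (in_rcoset (Gamma0 (n * m)) (R j1) g /\
            in_rcoset (Gamma0 (n * m)) (R j2) g))
  /\
  (* (ii) *)
  (forall (p n e : nat), prime p -> (0 < n)%N -> (p %| n)%N ->
   forall (J : Type) (R : J -> 'M[int]_2),
     rcoset_reps (Gamma0nm (p ^ e * n) p) (Gamma0nm n p) R ->
     rcoset_reps (Gamma0 (p ^ e * n)) (Gamma0 n) R).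
Proof.
split.
  move=> p m n _ _ _ J R [HG [Hc Hd]] j1 j2 ne g [[h1 H1 E1] [h2 H2 E2]].
  apply: ne; apply: (Hd j1 j2 (R j1)).
    by exists 1%:M; [exact: Gamma0nm1 | rewrite mul1mx].
  apply: (key H1 H2 (HG j1) (HG j2)); by rewrite -E1 -E2.
move=> p n e _ _ /dvdnP[s hs] J R [HG [Hc Hd]]; split; [|split].
- by move=> j; apply: G0nm_G0 (HG j).
- move=> g Hg.
  set a := g i0 i0; set b := g i0 i1.
  set ga := mk2 1 (- (a * b)) 0 1.
  have dga : \det ga = 1 by rewrite detE; case: (mk2E 1 (- (a * b)) 0 1) => -> -> -> ->; ring.
  have Hgg : Gamma0nm n p (ga *m g).
    move: Hg; rewrite /Gamma0nm /Gamma0 /SL2Z => /andP[/eqP dg /dvdzP[q cq]].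
    rewrite det_mulmx dga dg mul1r eqxx /=.
    case: (mk2E 1 (- (a * b)) 0 1) => e1 e2 e3 e4.
    apply/andP; split; apply/dvdzP; rewrite mulE /ga ?e1 ?e2 ?e3 ?e4.
      by exists q; rewrite cq; ring.
    move: dg; rewrite detE -/a -/b => dg.
    exists (- (b * b * q * s%:Z)).
    have -> : - (a * b) * g i1 i1 = - b * (a * g i1 i1) by ring.
    have -> : a * g i1 i1 = 1 + b * g i1 i0 by rewrite -dg; ring.
    rewrite cq hs PoszM; ring.
  case: (Hc _ Hgg) => j [k Hk Ek].
  exists j; exists (adj2 ga *m k); last first.
    by rewrite -mulmxA -Ek mulmxA adj2_mull // mul1mx.
  move: Hk; rewrite /Gamma0nm /Gamma0 /SL2Z => /andP[/andP[/eqP dk /dvdzP[q cq]] _].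
  rewrite det_mulmx det_adj2 dga dk mul1r eqxx /=.
  apply/dvdzP; exists q; rewrite mulE cq.
  case: (adj2E ga) => _ _ -> ->.
  case: (mk2E 1 (- (a * b)) 0 1) => e1 e2 e3 e4; rewrite /ga e1 e3; ring.
- move=> j1 j2 g [h1 H1 E1] [h2 H2 E2].
  apply: (Hd j1 j2 (R j1)).
    by exists 1%:M; [exact: Gamma0nm1 | rewrite mul1mx].
  apply: (key H1 H2 (HG j1) (HG j2)); by rewrite -E1 -E2.
Qed.
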